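(* Let $d\ge1$ and let $G$ and $H$ be ordered graphs, each with $m$ edges, such that $M^{\mathbb E}_{d,G}=M^{\mathbb E}_{d,H}$. Then the edge bijection sending the $k$-th edge of $G$ to the $k$-th edge of $H$ is a cycle isomorphism.
   Context: An ordered graph is a finite vertex set with a sequence $(E_1,\dots,E_m)$ of distinct unordered pairs of distinct vertices. For a real configuration $\mathbf p$ in $\mathbb R^d$, $m^{\mathbb E}_G(\mathbf p)\in\mathbb R^m$ has $k$-th coordinate $\|\mathbf p_i-\mathbf p_j\|^2$ with $E_k=\{i,j\}$; $M^{\mathbb E}_{d,G}$ is the image of $m^{\mathbb E}_G$ over all real configurations in $\mathbb R^d$. A set of edges is cycle supported if its edges, in some order, form a simple cycle. An edge bijection between two graphs is a cycle isomorphism if a set of edges is cycle supported exactly when its image is cycle supported. *)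

(* Defs.v *)
From Stdlib Require Import Reals.
From mathcomp Require Import all_boot.
Set Implicit Arguments. Unset Strict Implicit. Unset Printing Implicit Defensive.

Definition same_edge (V : eqType) (e f : V * V) : bool :=
  ((e.1 == f.1) && (e.2 == f.2)) || ((e.1 == f.2) && (e.2 == f.1)).

Definition ordered_graph (V : finType) (m : nat) (E : m.-tuple (V * V)) : Prop :=
  (forall k : 'I_m, (tnth E k).1 != (tnth E k).2) /\
  (forall k l : 'I_m, same_edge (tnth E k) (tnth E l) -> k = l).

Definition sqdist (d : nat) (x y : 'I_d -> R) : R :=
  foldr (fun i acc => Rplus (Rmult (Rminus (x i) (y i)) (Rminus (x i) (y i))) acc)
        R0 (enum 'I_d).

Definition measurement (d : nat) (V : finType) (m : nat) (E : m.-tuple (V * V))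
  (p : V -> 'I_d -> R) : 'I_m -> R :=
  fun k => sqdist (p (tnth E k).1) (p (tnth E k).2).

Definition in_measurement_variety (d : nat) (V : finType) (m : nat)
  (E : m.-tuple (V * V)) (x : 'I_m -> R) : Prop :=
  exists p : V -> 'I_d -> R, measurement E p = x.

Definition cycle_supported (V : finType) (m : nat) (E : m.-tuple (V * V))
  (S : {set 'I_m}) : Prop :=
  exists c : seq V,
    [/\ 3 <= size c, uniq c,
        (forall k : 'I_m, k \in S ->
            has (same_edge (tnth E k)) (zip c (rot 1 c)))
      & (forall pr, pr \in zip c (rot 1 c) ->
            exists2 k : 'I_m, k \in S & same_edge (tnth E k) pr)].

Definition index_cycle_isomorphism (V W : finType) (m : nat)
  (E : m.-tuple (V * V)) (F : m.-tuple (W * W)) : Prop :=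
  forall S : {set 'I_m}, cycle_supported E S <-> cycle_supported F S.

(* Main.v *)
Require Import Defs.
From Stdlib Require Import Reals Lra FunctionalExtensionality.
From mathcomp Require Import all_boot.
Set Implicit Arguments. Unset Strict Implicit. Unset Printing Implicit Defensive.

Lemma zips0 (A B : Type) (s : seq A) : zip s (@nil B) = [::].
Proof. by case: s. Qed.
Lemma zip_drop (A B : Type) n (s : seq A) (t : seq B) :
  zip (drop n s) (drop n t) = drop n (zip s t).
Proof. elim: n s t => [|n IH] [|a s] [|b t] //=; try by rewrite ?zips0 ?IH; by case: (drop _ _). Qed.
Lemma zip_take (A B : Type) n (s : seq A) (t : seq B) :
  zip (take n s) (take n t) = take n (zip s t).
Proof. elim: n s t => [|n IH] [|a s] [|b t] //=; try by rewrite ?zips0 ?IH; by case: (take _ _). Qed.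
Lemma zip_rot (A B : Type) n (s : seq A) (t : seq B) : size s = size t ->
  zip (rot n s) (rot n t) = rot n (zip s t).
Proof. move=> e; rewrite /rot zip_cat ?size_drop ?e // zip_drop zip_take //. Qed.

Definition cpairs (V : Type) (c : seq V) := zip c (rot 1 c).

Lemma cyc_norm (V : eqType) (c : seq V) pr : 3 <= size c -> uniq c -> pr \in cpairs c ->
  exists x y s, [/\ uniq [:: x, y & s], s != [::], pr = (x,y) &
     cpairs c =i (x,y) :: zip (y::s) (rcons s x)].
Proof.
move=> sz uc prin; case: (rot_to prin) => i rest E.
have E2 : cpairs (rot i c) = pr :: rest.
  by rewrite /cpairs rot_rot zip_rot ?size_rot // -E.
have sz' : 3 <= size (rot i c) by rewrite size_rot.
have uc' : uniq (rot i c) by rewrite rot_uniq.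
move: E2 sz' uc'; case: (rot i c) => [|x [|y [|z s]]] //= E2 _ uc'.
exists x, y, (z :: s); split => //.
  by move: E2; rewrite /cpairs rot1_cons /= => -[].
move=> q; rewrite -(mem_rot i) E -E2 /cpairs rot1_cons //.
Qed.

Lemma zip_cat_size (A B : Type) (s u : seq A) (t : seq B) : size s = size t ->
  zip (s ++ u) t = zip s t.
Proof. elim: s t => [|a s IH] [|b t] //=; first by case: u. by move=> [] /IH ->. Qed.

Lemma mem_zip2 (A B : eqType) (s : seq A) (t : seq B) u w :
  (u, w) \in zip s t -> (u \in s) /\ (w \in t).
Proof.
elim: s t => [|a s IH] [|b t] //=; rewrite inE => /orP[/eqP [-> ->]|/IH [h1 h2]].
  by rewrite !inE !eqxx.
by rewrite !inE h1 h2 !orbT.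
Qed.

Lemma cpairs_split (V : eqType) (z : V) q pr :
  pr \in zip (z :: q) (rcons q z) = (pr \in zip (z :: q) q) || (pr == (last z q, z)).
Proof.
have e : size (belast z q) = size q by rewrite size_belast.
rewrite lastI zip_rcons // mem_rcons inE orbC -cats1 zip_cat_size //.
Qed.

Lemma pp_index (V : eqType) (z : V) q u w : uniq (z :: q) -> (u, w) \in zip (z :: q) q ->
  index w (z :: q) = (index u (z :: q)).+1.
Proof.
elim: q z => [|y q IH] z //=.
move=> /andP [zn uq]; rewrite inE => /orP [/eqP [-> ->]|h].
  have zy : (z == y) = false by apply: contraNF zn => /eqP->; rewrite inE eqxx.
  by rewrite zy !eqxx.
have [hu hw] := mem_zip2 h.
have -> : (z == w) = false.
  by apply/negbTE; apply: contraNneq zn => ->; rewrite inE hw orbT.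
have -> : (z == u) = false by apply/negbTE; apply: contraNneq zn => ->.
by have := IH y uq h; rewrite /= => ->.
Qed.

Lemma pp_const (V : eqType) (X : Type) (f : V -> X) z q :
  (forall u w, (u, w) \in zip (z :: q) q -> f u = f w) -> f (last z q) = f z.
Proof.
elim: q z => [|y q IH] z //= H.
rewrite IH; first by symmetry; apply: H; rewrite inE eqxx.
by move=> u w h; apply: H; rewrite inE h orbT.
Qed.

Lemma pp_path (V : eqType) (R : rel V) z q u w : path R z q -> (u, w) \in zip (z :: q) q -> R u w.
Proof.
elim: q z => [|y q IH] z //= /andP [hzy hp]; rewrite inE => /orP [/eqP [-> ->]//|h].
exact: IH hp h.
Qed.

Section SE.
Variable V : eqType.
Implicit Types e f g : V * V.

Lemma se_refl e : same_edge e e.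
Proof. by rewrite /same_edge !eqxx. Qed.
Lemma se_sym e f : same_edge e f -> same_edge f e.
Proof.
case: e f => [a b] [c d]; rewrite /same_edge /=.
by case/orP => /andP [/eqP-> /eqP->]; rewrite !eqxx ?orbT.
Qed.
Lemma se_trans e f g : same_edge e f -> same_edge f g -> same_edge e g.
Proof.
case: e f g => [a b] [c d] [x y]; rewrite /same_edge /=.
by case/orP => /andP [/eqP-> /eqP->]; case/orP => /andP [/eqP-> /eqP->]; rewrite !eqxx ?orbT.
Qed.
Lemma se_fun (X : Type) (h : V -> X) e f : same_edge e f -> (h e.1 = h e.2 <-> h f.1 = h f.2).
Proof.
case: e f => [a b] [c d]; rewrite /same_edge /=.
case/orP => /andP [/eqP-> /eqP->] //; split=> ->; done.
Qed.

Lemma path_of_cyc (x y : V) s : zip (y :: s) (rcons s x) = zip (y :: rcons s x) (rcons s x).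
Proof. have e := @zip_cat_size _ _ (y :: s) [:: x] (rcons s x) (esym (size_rcons s x)).
by rewrite cats1 rcons_cons in e. Qed.

Lemma uniq_path_of_cyc (x y : V) s : uniq [:: x, y & s] -> uniq (y :: rcons s x).
Proof. by rewrite -rcons_cons rcons_uniq. Qed.

Lemma no_kpair (x y : V) s a b : uniq [:: x, y & s] -> s != [::] ->
  (a, b) \in zip (y :: s) (rcons s x) -> ~~ same_edge (x, y) (a, b).
Proof.
move=> u sn h; have uP := uniq_path_of_cyc u.
rewrite path_of_cyc in h; have ei := pp_index uP h.
have xn : x \notin y :: s by move: u => /= /andP [].
have ix : index x (y :: rcons s x) = (size s).+1.
  rewrite -rcons_cons -cats1 index_cat (negbTE xn) /= eqxx addn0 //.
apply/negP; rewrite /same_edge /= => /orP [] /andP [/eqP ea /eqP eb].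
  by move: ei; rewrite -ea -eb /= eqxx.
move: ei; rewrite -ea -eb ix /= eqxx => -[] s0.
by move: sn; rewrite -size_eq0 s0.
Qed.
End SE.

Local Open Scope R_scope.
Lemma fold_ge0 (d : nat) (x y : 'I_d -> R) (l : seq 'I_d) :
  (0 <= foldr (fun i acc => Rplus (Rmult (Rminus (x i) (y i)) (Rminus (x i) (y i))) acc) R0 l).
Proof.
elim: l => [|i l IH] /=; first by apply: Rle_refl.
have := Rle_0_sqr (x i - y i); rewrite /Rsqr => h; lra.
Qed.

Lemma fold_eq0 (d : nat) (x y : 'I_d -> R) (l : seq 'I_d) :
  foldr (fun i acc => Rplus (Rmult (Rminus (x i) (y i)) (Rminus (x i) (y i))) acc) R0 l = R0 ->
  forall i, i \in l -> x i = y i.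
Proof.
elim: l => [|j l IH] //= h i; rewrite inE => /orP [/eqP ->|hi].
  have := Rle_0_sqr (x j - y j); have := fold_ge0 x y l; rewrite /Rsqr => h1 h2.
  have h3 : ((x j - y j) * (x j - y j) = 0) by lra.
  by case: (Rmult_integral _ _ h3) => h4; lra.
apply: IH hi.
have := Rle_0_sqr (x j - y j); have := fold_ge0 x y l; rewrite /Rsqr => h1 h2; lra.
Qed.

Lemma sqdist_eq0 (d : nat) (x y : 'I_d -> R) : sqdist x y = R0 -> x = y.
Proof.
move=> h; apply: functional_extensionality => i; apply: (fold_eq0 h).
by rewrite mem_enum.
Qed.

Lemma sqdist_xx (d : nat) (x : 'I_d -> R) : sqdist x x = R0.
Proof.
rewrite /sqdist; elim: (enum 'I_d) => [|i l IH] //=; rewrite IH; ring.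
Qed.

Lemma meas_eq0 d (V : finType) m (E : m.-tuple (V * V)) (p : V -> 'I_d -> R) k :
  measurement E p k = R0 <-> p (tnth E k).1 = p (tnth E k).2.
Proof.
rewrite /measurement; split; first exact: sqdist_eq0.
by move=> ->; apply: sqdist_xx.
Qed.
Local Close Scope R_scope.

Lemma cycA d (V : finType) m (E : m.-tuple (V * V)) (T : {set 'I_m}) (p : V -> 'I_d -> R) k :
  cycle_supported E T -> k \in T ->
  (forall j, j \in T -> j != k -> measurement E p j = R0) -> measurement E p k = R0.
Proof.
case=> c [sz uc Hhas Hcov] kT H.
have /hasP [pr prin sek] := Hhas k kT.
have [x [y [s [u sn epr Hmem]]]] := cyc_norm sz uc prin.
subst pr.
apply/meas_eq0; apply/(se_fun p sek) => /=.
have h := @pp_const V _ p y (rcons s x); rewrite last_rcons in h; apply: h.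
move=> a b hin; rewrite -path_of_cyc in hin.
have hin' : (a, b) \in cpairs c by rewrite Hmem inE hin orbT.
have [j jT sej] := Hcov _ hin'.
case: (eqVneq j k) => [ejk|njk].
  subst j; by move: (no_kpair u sn hin); rewrite (se_trans (se_sym sek) sej).
have := H j jT njk; move/meas_eq0; exact: (se_fun p sej).1.
Qed.

Lemma cycB d (V : finType) m (E : m.-tuple (V * V)) (S : {set 'I_m}) k k0 :
  0 < d -> ordered_graph E -> cycle_supported E S -> k \in S -> k0 \in S -> k != k0 ->
  exists p : V -> 'I_d -> R,
    (forall j, j \in S -> j != k -> j != k0 -> measurement E p j = R0) /\
    measurement E p k <> R0.
Proof.
move=> d0 [lf dist] [c [sz uc Hhas Hcov]] kS k0S nk.
have /hasP [pr0 pr0in se0] := Hhas k0 k0S.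
have [x [y [s [u sn epr Hmem]]]] := cyc_norm sz uc pr0in. subst pr0.
have pathpair : forall j, j \in S -> j != k0 -> exists a b,
    (a, b) \in zip (y :: rcons s x) (rcons s x) /\ same_edge (tnth E j) (a, b).
  move=> j jS nj; have /hasP [[a b] hin sej] := Hhas j jS.
  rewrite Hmem inE in hin; case/orP: hin => [/eqP eab|hin].
    rewrite eab in sej.
    by move: nj; rewrite (dist _ _ (se_trans sej (se_sym se0))) eqxx.
  by exists a, b; rewrite -path_of_cyc.
have [a [b [hab sek]]] := pathpair k kS nk.
set P := y :: rcons s x.
have uP : uniq P := uniq_path_of_cyc u.
have [haP hbP] := mem_zip2 hab.
have hbP' : b \in P by rewrite inE hbP orbT.
have eiab := pp_index uP hab.
pose f (v : V) : 'I_d -> R := fun _ => if index v P <= index a P then R1 else R0.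
exists f; split.
  move=> j jS njk njk0; have [a' [b' [hin sej]]] := pathpair j jS njk0.
  apply/meas_eq0; apply/(se_fun f sej) => /=.
  have ei := pp_index uP hin.
  have [ha' hb'] := mem_zip2 hin.
  have hb'P : b' \in P by rewrite inE hb' orbT.
  case: (eqVneq (index a' P) (index a P)) => [eia|nia].
    have ea : a' = a by move: eia; apply: index_inj.
    have eb : b' = b.
      have eib : index b' P = index b P by rewrite ei eiab eia.
      by move: eib; apply: index_inj.
    subst a' b'.
    by move: njk; rewrite (dist _ _ (se_trans sej (se_sym sek))) eqxx.
  by rewrite /f ei ltn_neqAle nia.
move/meas_eq0; move/(se_fun f sek) => /=; rewrite /f eiab leqnn ltnn => eq.
have := f_equal (fun g => g (Ordinal d0)) eq => /= h.
by apply: R1_neq_R0.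
Qed.

Definition Pcyc m (M : ('I_m -> R) -> Prop) (S : {set 'I_m}) : Prop :=
  (exists k, k \in S) /\
  (forall k y, k \in S -> M y -> (forall j, j \in S -> j != k -> y j = R0) -> y k = R0) /\
  (forall k k0, k \in S -> k0 \in S -> k != k0 -> exists y, M y /\
     (forall j, j \in S -> j != k -> j != k0 -> y j = R0) /\ y k <> R0).

Lemma Pcyc_transfer m (M1 M2 : ('I_m -> R) -> Prop) S :
  (forall y, M1 y <-> M2 y) -> Pcyc M1 S -> Pcyc M2 S.
Proof.
move=> HM [h1 [h2 h3]]; split => //; split.
  by move=> k y kS /HM; apply: h2.
move=> k k0 kS k0S nk; have [y [/HM hy hh]] := h3 k k0 kS k0S nk.
by exists y.
Qed.

Lemma cyc_to_P d (V : finType) m (E : m.-tuple (V * V)) (S : {set 'I_m}) :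
  0 < d -> ordered_graph E -> cycle_supported E S -> Pcyc (in_measurement_variety d E) S.
Proof.
move=> d0 og cs; split; last split.
- case: cs => [[|x c] [sz uc Hhas Hcov]] //.
  have hin : nth (x, x) (zip (x :: c) (rot 1 (x :: c))) 0 \in zip (x :: c) (rot 1 (x :: c)).
    by apply: mem_nth; rewrite size_zip size_rot minnn.
  by have [k kS _] := Hcov _ hin; exists k.
- move=> k y kS [p <-] H; exact: (cycA cs kS H).
- move=> k k0 kS k0S nk; have [p [h1 h2]] := cycB d0 og cs kS k0S nk.
  by exists (measurement E p); split => //; exists p.
Qed.

Lemma P_to_cyc d (V : finType) m (E : m.-tuple (V * V)) (S : {set 'I_m}) :
  0 < d -> ordered_graph E -> Pcyc (in_measurement_variety d E) S -> cycle_supported E S.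
Proof.
move=> d0 og; have [lf dist] := og; case=> [[k kS] [HA HB]].
case ek: (tnth E k) => [k1 k2].
pose Rl : rel V := fun u v => [exists j, (j \in S) && (j != k) && same_edge (tnth E j) (u, v)].
have Rsym : forall u v, Rl u v -> Rl v u.
  move=> u v /existsP [j /andP [/andP [jS nj] se]]; apply/existsP; exists j.
  rewrite jS nj /=; apply: (se_trans se); by rewrite /same_edge !eqxx orbT.
have conn : connect Rl k1 k2.
  apply/negPn/negP => nc.
  pose p (v : V) : 'I_d -> R := fun _ => if connect Rl k1 v then R1 else R0.
  have hk := HA k (measurement E p) kS (ex_intro _ p erefl).
  have : measurement E p k = R0.
    apply: hk => j jS nj; apply/meas_eq0; rewrite /p.
    have rj : Rl (tnth E j).1 (tnth E j).2.
      by apply/existsP; exists j; rewrite jS nj /same_edge !eqxx.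
    have -> : connect Rl k1 (tnth E j).1 = connect Rl k1 (tnth E j).2.
      apply/idP/idP => h.
        exact: connect_trans h (connect1 rj).
      exact: connect_trans h (connect1 (Rsym _ _ rj)).
    by [].
  move/meas_eq0; rewrite ek /p /= connect0 (negbTE nc) => eq.
  have := f_equal (fun g => g (Ordinal d0)) eq => /= h.
  by apply: R1_neq_R0.
have [q' [pq' uq' lq']] : exists q', [/\ path Rl k1 q', uniq (k1 :: q') & last k1 q' = k2].
  have [q pq eq2] := connectP conn.
  move: eq2; case: (shortenP pq) => q' pq' uq' _ ->.
  by exists q'.
set c := k1 :: q'.
have sz : 3 <= size c.
  move: pq' lq'; rewrite /c; case: q' {uq' c} => [|w [|w' q'']] //=.
    move=> _ e; by move: (lf k); rewrite ek /= e eqxx.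
  rewrite andbT => /existsP [j /andP [/andP [jS nj] se]] e.
  by move: nj; rewrite (dist j k) ?eqxx // ek -e.
have memc : forall pr, pr \in zip c (rot 1 c) =
    (pr \in zip (k1 :: q') q') || (pr == (k2, k1)).
  by move=> pr; rewrite /c rot1_cons cpairs_split lq'.
pose T := [set j in S | has (same_edge (tnth E j)) (zip c (rot 1 c))].
have cycT : cycle_supported E T.
  exists c; split => //.
    by move=> j; rewrite inE => /andP [].
  move=> [u w]; rewrite memc => /orP [hin|/eqP epr].
    have /existsP [j /andP [/andP [jS nj] se]] := pp_path pq' hin.
    exists j => //; rewrite inE jS /=; apply/hasP; exists (u, w) => //.
    by rewrite memc hin.
  exists k; last by rewrite ek epr /same_edge !eqxx orbT.
  rewrite inE kS /=; apply/hasP; exists (k2, k1); first by rewrite memc eqxx orbT.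
  by rewrite ek /same_edge !eqxx orbT.
have kT : k \in T by case: cycT => _ _; rewrite inE kS /=; apply/hasP; exists (k2, k1);
  [rewrite memc eqxx orbT | rewrite ek /same_edge !eqxx orbT].
have ST : forall j, j \in S -> j \in T.
  move=> k0 k0S; apply/negPn/negP => nT.
  have nk : k != k0 by apply: contraNneq nT => <-.
  have [y [[p ep] [Hz Hnz]]] := HB k k0 kS k0S nk; subst y.
  apply: Hnz; apply: (cycA cycT kT) => j jT njk; apply: Hz => //.
    by move: jT; rewrite inE => /andP [].
  by apply: contraNneq nT => <-.
case: cycT => c' [sz' uc' Hhas Hcov]; exists c'; split => //.
  by move=> j /ST; apply: Hhas.
move=> pr /Hcov [j jT se]; exists j => //; by move: jT; rewrite inE => /andP [].
Qed.

Theorem mainTheorem16 (d : nat) (V W : finType) (m : nat)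
  (G : m.-tuple (V * V)) (H : m.-tuple (W * W)) :
  1 <= d ->
  ordered_graph G -> ordered_graph H ->
  (forall x : 'I_m -> R,
     in_measurement_variety d G x <-> in_measurement_variety d H x) ->
  index_cycle_isomorphism G H.
Proof.
move=> d0 oG oH HM S; split => cs.
  apply: (P_to_cyc d0 oH); apply: (Pcyc_transfer HM); exact: cyc_to_P.
apply: (P_to_cyc d0 oG); apply: (Pcyc_transfer (M1 := in_measurement_variety d H)).
  by move=> y; split => /HM.
exact: cyc_to_P.
Qed.
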